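(* Let $n\ge 1$ and $\psi,\eta\in(0,1)^n$. Let $Y\in\{0,1\}$ be a random bit with $\mathbb{P}(Y=1)=\mathbb{P}(Y=0)=1/2$, and conditionally on $Y$ let $X_1,\ldots,X_n\in\{0,1\}$ be independent with $\mathbb{P}(X_i=1\mid Y=1)=\psi_i$ and $\mathbb{P}(X_i=0\mid Y=0)=\eta_i$. Let $f^{\mathrm{OPT}}:\{0,1\}^n\to\{0,1\}$ be a decision rule minimizing $\mathbb{P}(f(X)\neq Y)$ over all $f:\{0,1\}^n\to\{0,1\}$, where $X=(X_1,\ldots,X_n)$. Let $\pi_i=(\psi_i+\eta_i)/2$ and $\gamma_i=\log\frac{\pi_i}{1-\pi_i}$. Then $$\mathbb{P}(f^{\mathrm{OPT}}(X)\neq Y)\ge\frac12\cdot 2^n\sqrt{\prod_{i=1}^n\pi_i(1-\pi_i)}\cdot\exp\Big(-\frac12\sum_{i=1}^n|\gamma_i|\Big).$$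
   Context: $\pi_i$ is the balanced accuracy of expert $i$; $\psi_i$ is its sensitivity and $\eta_i$ its specificity. *)

(* Defs.v *)
From HB Require Import structures.
From mathcomp Require Import all_boot all_order all_algebra.
From mathcomp Require Import reals sequences exp.
Set Implicit Arguments. Unset Strict Implicit. Unset Printing Implicit Defensive.
Import Order.TTheory GRing.Theory Num.Theory.
Local Open Scope ring_scope.

Definition lik1 (R : realType) (n : nat) (psi : 'I_n -> R)
  (x : {ffun 'I_n -> bool}) : R :=
  \prod_(i < n) (if x i then psi i else 1 - psi i).

Definition lik0 (R : realType) (n : nat) (eta : 'I_n -> R)
  (x : {ffun 'I_n -> bool}) : R :=
  \prod_(i < n) (if x i then 1 - eta i else eta i).

Definition joint (R : realType) (n : nat) (psi eta : 'I_n -> R)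
  (x : {ffun 'I_n -> bool}) (y : bool) : R :=
  2^-1 * (if y then lik1 psi x else lik0 eta x).

Definition err (R : realType) (n : nat) (psi eta : 'I_n -> R)
  (f : {ffun 'I_n -> bool} -> bool) : R :=
  \sum_(x : {ffun 'I_n -> bool}) \sum_(y : bool)
     (if f x != y then joint psi eta x y else 0).

Definition bacc (R : realType) (n : nat) (psi eta : 'I_n -> R) (i : 'I_n) : R :=
  (psi i + eta i) / 2.

Definition logodds (R : realType) (p : R) : R := ln (p / (1 - p)).

(* Main.v *)
Require Import Defs.
From HB Require Import structures.
From mathcomp Require Import all_boot all_order all_algebra.
From mathcomp Require Import reals sequences exp.
From mathcomp Require Import ring lra.
Import Order.TTheory GRing.Theory Num.Theory.
Local Open Scope ring_scope.

Lemma prod_min (R : realType) (I : finType) (F G : I -> R) :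
  (forall i, 0 <= F i) -> (forall i, 0 <= G i) ->
  \prod_i Order.min (F i) (G i) <= Order.min (\prod_i F i) (\prod_i G i).
Proof.
move=> hF hG; rewrite le_min; apply/andP; split; apply: ler_prod => i _;
  apply/andP; split.
- by rewrite le_min hF hG.
- by rewrite ge_min lexx.
- by rewrite le_min hF hG.
- by rewrite ge_min lexx orbT.
Qed.

Lemma per_coord (R : realType) (p : R) : 0 < p < 1 ->
  p * (1 - p) * expR (- `|ln (p / (1 - p))|) = (Order.min p (1 - p)) ^+ 2.
Proof.
move=> /andP[p0 p1].
have q0 : 0 < 1 - p by lra.
have z0 : 0 < p / (1 - p) by apply: divr_gt0.
have hz : expR (ln (p / (1 - p))) = p / (1 - p) by apply: lnK; rewrite posrE.
case: (lerP p (1 - p)) => h.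
- have : p / (1 - p) <= 1 by rewrite ler_pdivrMr // mul1r.
  move/ln_le0 => hl.
  rewrite ler0_norm // opprK hz; field; lra.
- have : 1 <= p / (1 - p) by rewrite ler_pdivlMr // mul1r; lra.
  move/ln_ge0 => hl.
  rewrite ger0_norm // expRN hz; field; lra.
Qed.

Theorem theorem3 (R : realType) (n : nat) (psi eta : 'I_n -> R)
  (hn : (1 <= n)%N)
  (hpsi : forall i, 0 < psi i < 1) (heta : forall i, 0 < eta i < 1)
  (fopt : {ffun 'I_n -> bool} -> bool)
  (hopt : forall f : {ffun 'I_n -> bool} -> bool, err psi eta fopt <= err psi eta f) :
  err psi eta fopt >=
    2^-1 * 2 ^+ n
    * Num.sqrt (\prod_(i < n) (bacc psi eta i * (1 - bacc psi eta i)))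
    * expR (- (2^-1 * \sum_(i < n) `| logodds (bacc psi eta i) |)).
Proof.
set a := fun i (b : bool) => if b then psi i else 1 - psi i.
set c := fun i (b : bool) => if b then 1 - eta i else eta i.
set m := fun i => Order.min (bacc psi eta i) (1 - bacc psi eta i).
have a0 : forall i b, 0 <= a i b.
  move=> i [] /=; have := hpsi i; lra.
have c0 : forall i b, 0 <= c i b.
  move=> i [] /=; have := heta i; lra.
have hm0 : forall i, 0 <= m i.
  move=> i; rewrite /m /bacc le_min; have := hpsi i; have := heta i.
  move=> /andP[? ?] /andP[? ?]; apply/andP; split; lra.
have step1 : 2^-1 * \sum_x Order.min (lik1 psi x) (lik0 eta x) <= err psi eta fopt.
  rewrite /err mulr_sumr; apply: ler_sum => x _.
  rewrite big_bool /= /joint.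
  case: (fopt x) => /=; rewrite ?add0r ?addr0;
    apply: ler_wpM2l; rewrite ?invr_ge0 ?ler0n ?ge_min ?le_refl ?orbT //.
have step2 : \prod_i (Order.min (a i true) (c i true) + Order.min (a i false) (c i false))
    <= \sum_x Order.min (lik1 psi x) (lik0 eta x).
  have -> : \prod_i (Order.min (a i true) (c i true) + Order.min (a i false) (c i false))
      = \prod_i \sum_(b : bool) Order.min (a i b) (c i b).
    by apply: eq_bigr => i _; rewrite big_bool.
  rewrite bigA_distr_bigA /=; apply: ler_sum => x _.
  have := prod_min _ _ _ _ (fun i => a0 i (x i)) (fun i => c0 i (x i)).
  by rewrite /lik1 /lik0.
have step3 : forall i, Order.min (a i true) (c i true) + Order.min (a i false) (c i false)
    = 2 * m i.
  move=> i; rewrite /a /c /m /bacc; have := hpsi i; have := heta i.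
  move=> /andP[? ?] /andP[? ?].
  case: (lerP (psi i) (1 - eta i)) => h1.
  +
    have h2 : eta i <= 1 - psi i by lra.
    rewrite (min_idPr h2).
    have h3 : (psi i + eta i) / 2 <= 1 - (psi i + eta i) / 2 by lra.
    by rewrite (min_idPl h3); field.
  +
    have h2 : 1 - psi i <= eta i by lra.
    rewrite (min_idPl h2).
    have h3 : 1 - (psi i + eta i) / 2 <= (psi i + eta i) / 2 by lra.
    by rewrite (min_idPr h3); field.
have hprod : \prod_i (Order.min (a i true) (c i true) + Order.min (a i false) (c i false))
    = 2 ^+ n * \prod_i m i.
  rewrite (eq_bigr _ (fun i _ => step3 i)) big_split /= prodr_const card_ord //.
have step4 : Num.sqrt (\prod_(i < n) (bacc psi eta i * (1 - bacc psi eta i)))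
    * expR (- (2^-1 * \sum_(i < n) `| logodds (bacc psi eta i) |)) = \prod_i m i.
  set s := \sum_(i < n) _.
  have -> : expR (- (2^-1 * s)) = Num.sqrt (expR (- s)).
    have -> : - s = - (2^-1 * s) + - (2^-1 * s) by field.
    rewrite expRD -expr2 sqrtr_sqr ger0_norm //; exact: expR_ge0.
  have hpos : 0 <= \prod_(i < n) (bacc psi eta i * (1 - bacc psi eta i)).
    apply: prodr_ge0 => i _; rewrite /bacc; have := hpsi i; have := heta i.
    move=> /andP[? ?] /andP[? ?]; apply: mulr_ge0; lra.
  rewrite -sqrtrM //.
  have -> : expR (- s) = \prod_i expR (- `| logodds (bacc psi eta i) |).
    rewrite /s -sumrN; exact: (big_morph _ (@expRD R) (expR0 R)).
  rewrite -big_split /=.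
  rewrite (eq_bigr (fun i => m i ^+ 2)).
    by rewrite prodrXl sqrtr_sqr ger0_norm //; apply: prodr_ge0.
  move=> i _; rewrite /logodds per_coord //.
  rewrite /bacc; have := hpsi i; have := heta i.
  move=> /andP[? ?] /andP[? ?]; apply/andP; split; lra.
rewrite -mulrA step4 -mulrA -hprod.
have h2 : (0 : R) <= 2^-1 by rewrite invr_ge0 ler0n.
 idtac "B". have := ler_wpM2l h2 step2. idtac "C". move=> h3. apply: le_trans h3 step1. Qed.
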